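(* Let $(Q_1,* )$ and $(Q_2,\cdot)$ be automorphic loops and let $\varphi:Q_1\to Q_2$ be a special half-isomorphism. If $\varphi$ has no GG-triple, then $\varphi$ is trivial, i.e. it is either an isomorphism or an anti-isomorphism.
   Context: A loop is a set with a binary operation in which all equations $ax=b$, $ya=b$ are uniquely solvable and which has a two-sided identity. For $a\in L$, $R_a:x\mapsto xa$, $L_a:x\mapsto ax$; the inner mapping group is the stabilizer of the identity in the group generated by all $R_a,L_a$. A loop is automorphic if every inner mapping is an automorphism. A half-isomorphism between loops $(L,* )$, $(L',\cdot)$ is a bijection $f$ with $f(x*y)\in\{f(x)\cdot f(y),f(y)\cdot f(x)\}$ for all $x,y\in L$; it is special if $f^{-1}$ is also a half-isomorphism, and trivial if it is an isomorphism or an anti-isomorphism ($f(x*y)=f(y)\cdot f(x)$ for all $x,y$). A GG-triple of a half-isomorphism $f$ is a triple $(x,y,z)$ of elements of $L$ such that $f(x*y)=f(x)\cdot f(y)\neq f(y)\cdot f(x)$ and $f(x*z)=f(z)\cdot f(x)\neq f(x)\cdot f(z)$. *)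

(* Defs.v *)
Definition is_loop {T : Type} (mul : T -> T -> T) (e : T) : Prop :=
  (forall a b : T, exists! x : T, mul a x = b) /\
  (forall a b : T, exists! y : T, mul y a = b) /\
  (forall x : T, mul e x = x /\ mul x e = x).

(* The multiplication group Mlt: the group of permutations generated by all
   L_a : x |-> a x and R_a : x |-> x a.  Every element is a finite composite
   of generators and their inverses; mlt f says f is such a composite. *)
Inductive mlt {T : Type} (mul : T -> T -> T) : (T -> T) -> Prop :=
  | mlt_id : mlt mul (fun x => x)
  | mlt_L (a : T) (f : T -> T) : mlt mul f -> mlt mul (fun x => mul a (f x))
  | mlt_R (a : T) (f : T -> T) : mlt mul f -> mlt mul (fun x => mul (f x) a)
  | mlt_Linv (a : T) (g f : T -> T) :
      (forall x, mul a (g x) = x) -> (forall x, g (mul a x) = x) ->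
      mlt mul f -> mlt mul (fun x => g (f x))
  | mlt_Rinv (a : T) (g f : T -> T) :
      (forall x, mul (g x) a = x) -> (forall x, g (mul x a) = x) ->
      mlt mul f -> mlt mul (fun x => g (f x)).

Definition inner_mapping {T : Type} (mul : T -> T -> T) (e : T) (f : T -> T) : Prop :=
  mlt mul f /\ f e = e.

(* Automorphic loop: every inner mapping is an automorphism (inner mappings
   are bijections, so it suffices that they are multiplicative). *)
Definition automorphic_loop {T : Type} (mul : T -> T -> T) (e : T) : Prop :=
  is_loop mul e /\
  forall f, inner_mapping mul e f -> forall x y, f (mul x y) = mul (f x) (f y).

Definition bijection {A B : Type} (f : A -> B) : Prop :=
  exists g : B -> A, (forall x, g (f x) = x) /\ (forall y, f (g y) = y).

Definition half_hom {A B : Type} (m1 : A -> A -> A) (m2 : B -> B -> B) (f : A -> B) : Prop :=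
  forall x y, f (m1 x y) = m2 (f x) (f y) \/ f (m1 x y) = m2 (f y) (f x).

Definition half_isomorphism {A B : Type} (m1 : A -> A -> A) (m2 : B -> B -> B) (f : A -> B) : Prop :=
  bijection f /\ half_hom m1 m2 f.

Definition special_half_isomorphism {A B : Type} (m1 : A -> A -> A) (m2 : B -> B -> B)
  (f : A -> B) : Prop :=
  half_isomorphism m1 m2 f /\
  exists g : B -> A, (forall x, g (f x) = x) /\ (forall y, f (g y) = y) /\
                     half_isomorphism m2 m1 g.

Definition is_isomorphism {A B : Type} (m1 : A -> A -> A) (m2 : B -> B -> B) (f : A -> B) : Prop :=
  bijection f /\ forall x y, f (m1 x y) = m2 (f x) (f y).

Definition is_anti_isomorphism {A B : Type} (m1 : A -> A -> A) (m2 : B -> B -> B) (f : A -> B) : Prop :=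
  bijection f /\ forall x y, f (m1 x y) = m2 (f y) (f x).

Definition trivial_half_iso {A B : Type} (m1 : A -> A -> A) (m2 : B -> B -> B) (f : A -> B) : Prop :=
  is_isomorphism m1 m2 f \/ is_anti_isomorphism m1 m2 f.

Definition GG_triple {A B : Type} (m1 : A -> A -> A) (m2 : B -> B -> B) (f : A -> B)
  (x y z : A) : Prop :=
  (f (m1 x y) = m2 (f x) (f y) /\ m2 (f x) (f y) <> m2 (f y) (f x)) /\
  (f (m1 x z) = m2 (f z) (f x) /\ m2 (f z) (f x) <> m2 (f x) (f z)).

(* Main.v *)
Require Import Defs.
From Stdlib Require Import Classical ClassicalEpsilon.

Section Aut.
Variables (T : Type) (m : T -> T -> T) (e : T).
Hypothesis A : automorphic_loop m e.

Lemma Tmap_ex (t : T) : exists F, inner_mapping m e F /\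
  (forall s, F s = s <-> m t s = m s t).
Proof.
  destruct A as [[HL [HR Hid]] _].
  pose (g := fun b => proj1_sig (constructive_indefinite_description _
               (match HL t b with ex_intro _ u (conj p _) => ex_intro _ u p end))).
  assert (g1 : forall x, m t (g x) = x).
  { intro x. unfold g. destruct (constructive_indefinite_description _ _). exact e0. }
  assert (g2 : forall x, g (m t x) = x).
  { intro x. destruct (HL t (m t x)) as [u [_ Hu]].
    transitivity u; [symmetry; apply Hu, g1 | apply Hu; reflexivity]. }
  exists (fun x => g (m x t)). split.
  - split.
    + apply (mlt_Linv m t g (fun x => m x t) g1 g2).
      exact (mlt_R m t (fun x => x) (mlt_id m)).
    + simpl. destruct (Hid t) as [E1 E2]. rewrite E1, <- E2 at 1. apply g2.
  - intro s; split; intro H.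
    + rewrite <- H at 1. rewrite g1. reflexivity.
    + rewrite <- H. apply g2.
Qed.

Lemma fix_left (F : T -> T) (HF : inner_mapping m e F) (a z : T) :
  F a = a -> F (m a z) = m a z -> F z = z.
Proof.
  destruct A as [[HL [HR Hid]] HA]. intros Ha Hw.
  rewrite (HA F HF), Ha in Hw.
  destruct (HL a (m a z)) as [u [_ Hu]].
  transitivity u; [symmetry; apply Hu, Hw | apply Hu; reflexivity].
Qed.

Lemma fix_right (F : T -> T) (HF : inner_mapping m e F) (a z : T) :
  F z = z -> F (m a z) = m a z -> F a = a.
Proof.
  destruct A as [[HL [HR Hid]] HA]. intros Hz Hw.
  rewrite (HA F HF), Hz in Hw.
  destruct (HR z (m a z)) as [u [_ Hu]].
  transitivity u; [symmetry; apply Hu, Hw | apply Hu; reflexivity].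
Qed.

Lemma comm_left (t a z : T) : m t a = m a t -> m t (m a z) = m (m a z) t ->
  m t z = m z t.
Proof.
  intros H1 H2. destruct (Tmap_ex t) as [F [HF HFi]].
  apply HFi. apply (fix_left F HF a z); apply HFi; assumption.
Qed.

Lemma comm_right (t a z : T) : m t z = m z t -> m t (m a z) = m (m a z) t ->
  m t a = m a t.
Proof.
  intros H1 H2. destruct (Tmap_ex t) as [F [HF HFi]].
  apply HFi. apply (fix_right F HF a z); apply HFi; assumption.
Qed.
End Aut.

Theorem proposition4p4 (Q1 Q2 : Type) (m1 : Q1 -> Q1 -> Q1) (e1 : Q1)
  (m2 : Q2 -> Q2 -> Q2) (e2 : Q2) (phi : Q1 -> Q2) :
  automorphic_loop m1 e1 -> automorphic_loop m2 e2 ->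
  special_half_isomorphism m1 m2 phi ->
  ~ (exists x y z : Q1, GG_triple m1 m2 phi x y z) ->
  trivial_half_iso m1 m2 phi.
Proof.
  intros A1 _ [[Hbij Hh] [g [g1 [g2 [_ Hg]]]]] NG.
  assert (inj : forall x y, phi x = phi y -> x = y).
  { intros x y E. rewrite <- (g1 x), <- (g1 y), E. reflexivity. }
  pose (H := fun x => forall y, phi (m1 x y) = m2 (phi x) (phi y)).
  pose (K := fun x => forall y, phi (m1 x y) = m2 (phi y) (phi x)).
  assert (cover : forall x, H x \/ K x).
  { intro x. destruct (classic (H x)) as [h|h]; [left; exact h|right].
    intro y. destruct (classic (phi (m1 x y) = m2 (phi y) (phi x))) as [k|k]; [exact k|].
    exfalso. apply h. intro z.
    destruct (classic (phi (m1 x z) = m2 (phi x) (phi z))) as [k2|k2]; [exact k2|].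
    exfalso. apply NG. exists x, y, z. unfold GG_triple.
    destruct (Hh x y) as [E|E]; [|contradiction].
    destruct (Hh x z) as [E2|E2]; [contradiction|].
    split; split; try assumption.
    - rewrite <- E; exact k.
    - rewrite <- E2; intro C; apply k2; exact C. }
  assert (HKc : forall x y, H x -> K y -> m1 x y = m1 y x).
  { intros x y hx ky. apply inj. rewrite hx, ky. reflexivity. }
  assert (HKi : forall x y, H x -> K y -> m2 (phi x) (phi y) = m2 (phi y) (phi x)).
  { intros x y hx ky. pose proof (HKc x y hx ky) as C.
    destruct (Hg (phi y) (phi x)) as [E|E]; rewrite g1, g1 in E.
    - rewrite <- (g2 (m2 (phi y) (phi x))), E, <- C, hx. reflexivity.
    - rewrite <- (g2 (m2 (phi y) (phi x))), E, hx. reflexivity. }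
  destruct (classic (forall x, H x)) as [AH|nAH].
  { left. split; [exact Hbij|]. intros x y. apply AH. }
  destruct (classic (forall x, K x)) as [AK|nAK].
  { right. split; [exact Hbij|]. intros x y. apply AK. }
  exfalso.
  apply not_all_ex_not in nAH as [b nb].
  apply not_all_ex_not in nAK as [a na].
  assert (ha : H a) by (destruct (cover a); tauto).
  assert (kb : K b) by (destruct (cover b); tauto).
  assert (exists y, H y /\ m1 a y <> m1 y a) as [y [hy ny]].
  { apply not_all_ex_not in na as [y ny]. exists y.
    destruct (cover y) as [hy|ky].
    - split; [exact hy|]. intro C. apply ny.
      rewrite C, hy. reflexivity.
    - exfalso. apply ny. rewrite ha. apply HKi; assumption. }
  assert (exists z, K z /\ m1 b z <> m1 z b) as [z [kz nz]].
  { apply not_all_ex_not in nb as [z nz]. exists z.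
    destruct (cover z) as [hz|kz].
    - exfalso. apply nz. rewrite kb. apply HKi; assumption.
    - split; [exact kz|]. intro C. apply nz.
      rewrite C, kz. reflexivity. }
  destruct (cover (m1 a z)) as [hw|kw].
  - apply nz. apply (comm_left Q1 m1 e1 A1 b a z).
    + symmetry. apply HKc; assumption.
    + symmetry. apply HKc; assumption.
  - apply ny. symmetry. apply (comm_right Q1 m1 e1 A1 y a z).
    + apply HKc; assumption.
    + apply HKc; assumption.
Qed.
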